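(* Assume $0<\underline{d}_w<\overline{d}_w\le L\cos(\underline{\theta}_w)<L/\cos(\underline{\theta}_w)$, where $\underline{\theta}_w\in(0,\pi/2)$. Consider the optimization problem $$\max_{P,d_w,\theta_w}\ \gamma_b(P,d_w,\theta_w)\quad\text{s.t.}\quad \mathcal{D}_{01}(P,d_w,\theta_w)\le2\epsilon^2,\ \ 0<P\le P_m,\ \ \underline{d}_w\le d_w\le\overline{d}_w,\ \ \underline{\theta}_w\le\theta_w\le\frac{\pi}{2}.$$ Then any optimal solution $(P^\ast,d_w^\ast,\theta_w^\ast)$ satisfies $d_w^\ast=\overline{d}_w$ and $\underline{\theta}_w\le\theta_w^\ast\le\arccos(\overline{d}_w/L)$. This conclusion holds regardless of the maximum transmit power constraint $P\le P_m$ (i.e., also when this constraint is removed).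
   Context: Setting: Willie and Bob are ground points at distance $L>0$; a UAV (transmitter) lies in the vertical plane through them, on Bob's side, at distance $d_w>0$ from Willie and at elevation angle $\theta_w\in[0,\pi/2]$ (radians) seen from Willie, and transmits with power $P$. Constants: path-loss exponents $\xi_{\mathrm{L}}<0$, $\xi_{\mathrm{N}}<0$; $a,b>0$; noise variances $\sigma_b^2,\sigma_w^2>0$; blocklength $n\in\mathbb{N}$; covertness parameter $\epsilon>0$; maximum power $P_m>0$. Define $d_b=\sqrt{L^2+d_w^2-2d_wL\cos(\theta_w)}$, $$p_b=\frac{1}{1+a\exp\!\left(-b\left[\frac{180}{\pi}\arcsin\!\left(\frac{d_w\sin\theta_w}{d_b}\right)-a\right]\right)},\qquad p_w=\frac{1}{1+a\exp\!\left(-b\left[\frac{180}{\pi}\theta_w-a\right]\right)},$$ $f(d_w,\theta_w)=d_b^{\xi_{\mathrm{L}}}p_b$, and the SNR at Bob $\gamma_b(P,d_w,\theta_w)=Pf(d_w,\theta_w)/\sigma_b^2$. With $\bar P=P d_w^{\xi_{\mathrm{L}}}p_w+P d_w^{\xi_{\mathrm{N}}}$, define the KL divergence $$\mathcal{D}_{01}(P,d_w,\theta_w)=\frac{n}{2}\left[\ln\!\left(\frac{\bar P+\sigma_w^2}{\sigma_w^2}\right)-\frac{\bar P}{\bar P+\sigma_w^2}\right].$$ *)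

(* Defs.v *)
From Stdlib Require Import Reals.
Open Scope R_scope.

Definition d_b (L dw thw : R) : R :=
  sqrt (L ^ 2 + dw ^ 2 - 2 * dw * L * cos thw).

Definition p_b (a b L dw thw : R) : R :=
  / (1 + a * exp (- b * ((180 / PI) * asin (dw * sin thw / d_b L dw thw) - a))).

Definition p_w (a b thw : R) : R :=
  / (1 + a * exp (- b * ((180 / PI) * thw - a))).

Definition f_gain (xiL a b L dw thw : R) : R :=
  Rpower (d_b L dw thw) xiL * p_b a b L dw thw.

Definition gamma_b (xiL a b L sb2 P dw thw : R) : R :=
  P * f_gain xiL a b L dw thw / sb2.

Definition Pbar (xiL xiN a b P dw thw : R) : R :=
  P * Rpower dw xiL * p_w a b thw + P * Rpower dw xiN.

Definition D01 (n : nat) (xiL xiN a b sw2 P dw thw : R) : R :=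
  let Pb := Pbar xiL xiN a b P dw thw in
  (INR n / 2) * (ln ((Pb + sw2) / sw2) - Pb / (Pb + sw2)).

(* feasible set; [powcap] is the optional maximum-power constraint *)
Definition feasible (powcap : R -> Prop) (n : nat) (xiL xiN a b sw2 eps
    dlo dhi thlo : R) (P dw thw : R) : Prop :=
  D01 n xiL xiN a b sw2 P dw thw <= 2 * eps ^ 2 /\
  0 < P /\ powcap P /\
  dlo <= dw <= dhi /\
  thlo <= thw <= PI / 2.

Definition optimal (powcap : R -> Prop) (n : nat) (xiL xiN a b L sb2 sw2 eps
    dlo dhi thlo : R) (P dw thw : R) : Prop :=
  feasible powcap n xiL xiN a b sw2 eps dlo dhi thlo P dw thw /\
  forall P' dw' thw',
    feasible powcap n xiL xiN a b sw2 eps dlo dhi thlo P' dw' thw' ->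
    gamma_b xiL a b L sb2 P' dw' thw' <= gamma_b xiL a b L sb2 P dw thw.

(* Main.v *)
Require Import Defs.
From Stdlib Require Import Reals Lra Psatz.
Open Scope R_scope.

Lemma rp_le x y e : 0 < x <= y -> e < 0 -> Rpower y e <= Rpower x e.
Proof.
  intros [Hx Hxy] He. unfold Rpower.
  destruct (Req_dec x y) as [->|Hne]; [lra|].
  left. apply exp_increasing. assert (ln x < ln y) by (apply ln_increasing; lra). nra.
Qed.

Lemma rp_lt x y e : 0 < x < y -> e < 0 -> Rpower y e < Rpower x e.
Proof.
  intros [Hx Hxy] He. unfold Rpower.
  apply exp_increasing. assert (ln x < ln y) by (apply ln_increasing; lra). nra.
Qed.

Lemma rp_pos x e : 0 < Rpower x e.
Proof. unfold Rpower; apply exp_pos. Qed.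

Lemma asin_mono r1 r2 : -1 <= r1 -> r1 <= r2 -> r2 <= 1 -> asin r1 <= asin r2.
Proof.
  intros H1 H12 H2. destruct (Rle_or_lt (asin r1) (asin r2)) as [h|h]; auto.
  pose proof (asin_bound r1); pose proof (asin_bound r2).
  assert (sin (asin r2) < sin (asin r1)) by (apply sin_increasing_1; lra).
  rewrite !sin_asin in H3 by lra. lra.
Qed.

Lemma logi_pos a b t : 0 < a -> 0 < / (1 + a * exp (- b * (t - a))).
Proof. intros; apply Rinv_0_lt_compat. pose proof (exp_pos (- b * (t - a))); nra. Qed.

Lemma logi_mono a b t1 t2 : 0 < a -> 0 < b -> t1 <= t2 ->
  / (1 + a * exp (- b * (t1 - a))) <= / (1 + a * exp (- b * (t2 - a))).
Proof.
  intros Ha Hb Ht. apply Rinv_le_contravar.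
  pose proof (exp_pos (- b * (t2 - a))); nra.
  destruct (Req_dec t1 t2) as [->|Hne]; [lra|].
  assert (exp (- b * (t2 - a)) < exp (- b * (t1 - a))) by (apply exp_increasing; nra).
  nra.
Qed.

Lemma pb_mono a b r1 r2 : 0 < a -> 0 < b -> -1 <= r1 -> r1 <= r2 -> r2 <= 1 ->
  / (1 + a * exp (- b * ((180 / PI) * asin r1 - a))) <=
  / (1 + a * exp (- b * ((180 / PI) * asin r2 - a))).
Proof.
  intros. apply logi_mono; auto.
  pose proof PI_RGT_0. pose proof (asin_mono r1 r2 H1 H2 H3).
  apply Rmult_le_compat_l; [|auto]. unfold Rdiv. apply Rmult_le_pos; [lra|].
  left; apply Rinv_0_lt_compat; lra.
Qed.

Lemma pw_mono a b t1 t2 : 0 < a -> 0 < b -> t1 <= t2 -> p_w a b t1 <= p_w a b t2.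
Proof.
  intros. unfold p_w. apply logi_mono; auto. pose proof PI_RGT_0.
  apply Rmult_le_compat_l; [|auto]. unfold Rdiv. apply Rmult_le_pos; [lra|].
  left; apply Rinv_0_lt_compat; lra.
Qed.

Lemma ln_ge u : 0 < u -> 1 - / u <= ln u.
Proof.
  intros Hu. destruct (Req_dec (ln u) 0) as [h|h].
  - assert (u = 1). { rewrite <- (exp_ln u) by lra. rewrite h, exp_0; auto. }
    subst. rewrite Rinv_1. lra.
  - pose proof (exp_ineq1 (- ln u) ltac:(lra)). rewrite exp_Ropp, exp_ln in H by lra. lra.
Qed.

Lemma hD x y s : 0 <= x -> x <= y -> 0 < s ->
  ln ((x + s) / s) - x / (x + s) <= ln ((y + s) / s) - y / (y + s).
Proof.
  intros Hx Hxy Hs.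
  assert (E : ln ((y + s) / s) = ln ((x + s) / s) + ln ((y+s)/(x+s))).
  { rewrite <- ln_mult by (apply Rdiv_lt_0_compat; lra). f_equal. field. lra. }
  rewrite E. pose proof (ln_ge ((y+s)/(x+s)) ltac:(apply Rdiv_lt_0_compat; lra)).
  assert (/ ((y + s) / (x + s)) = (x+s)/(y+s)) by (field; lra).
  rewrite H0 in H.
  assert (y / (y + s) - x / (x + s) <= 1 - (x + s) / (y + s)).
  { apply Rmult_le_reg_r with ((y+s)*(x+s)). nra.
    replace ((y / (y + s) - x / (x + s)) * ((y + s) * (x + s))) with (y*(x+s) - x*(y+s)) by (field; lra).
    replace ((1 - (x + s) / (y + s)) * ((y + s) * (x + s))) with ((y-x)*(x+s)) by (field; lra).
    nra. }
  lra.
Qed.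

Lemma sq_le x y : 0 <= x -> 0 <= y -> x * x <= y * y -> x <= y.
Proof. intros; nra. Qed.

Lemma ratio_le dw1 s1 Q1 dw2 s2 Q2 : 0 <= dw1 -> 0 <= s1 -> 0 <= dw2 -> 0 <= s2 ->
  0 < Q1 -> 0 < Q2 ->
  dw1 ^ 2 * s1 ^ 2 * Q2 <= dw2 ^ 2 * s2 ^ 2 * Q1 ->
  dw1 * s1 / sqrt Q1 <= dw2 * s2 / sqrt Q2.
Proof.
  intros. pose proof (sqrt_lt_R0 _ H3) as hu. pose proof (sqrt_lt_R0 _ H4) as hv.
  pose proof (sqrt_sqrt Q1 ltac:(lra)). pose proof (sqrt_sqrt Q2 ltac:(lra)).
  set (u := sqrt Q1) in *. set (v := sqrt Q2) in *.
  assert (dw1 * s1 * v <= dw2 * s2 * u).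
  { apply sq_le. apply Rmult_le_pos; [apply Rmult_le_pos|]; lra.
    apply Rmult_le_pos; [apply Rmult_le_pos|]; lra.
    replace (dw1 * s1 * v * (dw1 * s1 * v)) with (dw1 ^ 2 * s1 ^ 2 * (v * v)) by ring.
    replace (dw2 * s2 * u * (dw2 * s2 * u)) with (dw2 ^ 2 * s2 ^ 2 * (u * u)) by ring.
    rewrite H7, H6. auto. }
  apply Rmult_le_reg_r with (u * v). nra.
  replace (dw1 * s1 / u * (u * v)) with (dw1 * s1 * v) by (field; lra).
  replace (dw2 * s2 / v * (u * v)) with (dw2 * s2 * u) by (field; lra). auto.
Qed.

Lemma ratio_bound dw s Q : 0 <= dw -> 0 <= s -> 0 < Q -> (dw * s) ^ 2 <= Q ->
  -1 <= dw * s / sqrt Q <= 1.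
Proof.
  intros. pose proof (sqrt_lt_R0 _ H1). pose proof (sqrt_sqrt Q ltac:(lra)).
  assert (dw * s <= sqrt Q) by (apply sq_le; nra).
  split.
  - apply Rle_trans with 0. lra. apply Rmult_le_pos. nra. left; apply Rinv_0_lt_compat; lra.
  - apply Rmult_le_reg_r with (sqrt Q). lra. unfold Rdiv. rewrite Rmult_assoc, Rinv_l; lra.
Qed.

Lemma gamma_lt xiL a b L sb2 P dw thw dw' thw' :
  xiL < 0 -> 0 < a -> 0 < b -> 0 < sb2 -> 0 < P ->
  0 < d_b L dw' thw' < d_b L dw thw ->
  -1 <= dw * sin thw / d_b L dw thw ->
  dw * sin thw / d_b L dw thw <= dw' * sin thw' / d_b L dw' thw' ->
  dw' * sin thw' / d_b L dw' thw' <= 1 ->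
  gamma_b xiL a b L sb2 P dw thw < gamma_b xiL a b L sb2 P dw' thw'.
Proof.
  intros. unfold gamma_b, f_gain, p_b.
  pose proof (rp_lt _ _ xiL H4 H).
  pose proof (pb_mono a b _ _ H0 H1 H5 H6 H7).
  pose proof (rp_pos (d_b L dw thw) xiL).
  match goal with |- context [Rpower (d_b L dw thw) xiL * ?p] =>
    pose proof (logi_pos a b ((180 / PI) * asin (dw * sin thw / d_b L dw thw)) H0) end.
  unfold Rdiv. apply Rmult_lt_compat_r. apply Rinv_0_lt_compat; lra.
  apply Rmult_lt_compat_l. lra. nra.
Qed.

Lemma Pbar_mono xiL xiN a b P dw thw dw' thw' : 0 < a -> 0 < b -> 0 < P ->
  xiL < 0 -> xiN < 0 -> 0 < dw <= dw' -> thw' <= thw ->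
  0 <= Pbar xiL xiN a b P dw' thw' <= Pbar xiL xiN a b P dw thw.
Proof.
  intros. unfold Pbar.
  pose proof (rp_le _ _ _ H4 H2). pose proof (rp_le _ _ _ H4 H3).
  pose proof (pw_mono a b _ _ H H0 H5).
  assert (0 < p_w a b thw') by (apply logi_pos; auto).
  pose proof (rp_pos dw' xiL). pose proof (rp_pos dw' xiN).
  split.
  - assert (0 <= P * Rpower dw' xiL * p_w a b thw') by (apply Rmult_le_pos; [apply Rmult_le_pos|]; lra).
    nra.
  - apply Rplus_le_compat; [|nra].
    rewrite !Rmult_assoc. apply Rmult_le_compat_l. lra.
    apply Rmult_le_compat; lra.
Qed.

Lemma D01_mono n xiL xiN a b sw2 P dw thw dw' thw' : 0 < sw2 ->
  0 <= Pbar xiL xiN a b P dw' thw' <= Pbar xiL xiN a b P dw thw ->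
  D01 n xiL xiN a b sw2 P dw' thw' <= D01 n xiL xiN a b sw2 P dw thw.
Proof.
  intros Hs [H1 H2]. unfold D01. apply Rmult_le_compat_l.
  pose proof (pos_INR n); lra. apply hD; auto.
Qed.

Lemma Qfacts L x c s : 0 < L -> 0 <= x < L -> 0 <= c <= 1 -> 0 <= s -> s^2 + c^2 = 1 ->
  0 < L ^ 2 + x ^ 2 - 2 * x * L * c /\ (x * s) ^ 2 <= L ^ 2 + x ^ 2 - 2 * x * L * c.
Proof.
  intros. assert (x * c < L) by nra.
  split; nra.
Qed.

Lemma trig thw : 0 <= thw <= PI / 2 ->
  0 <= sin thw /\ 0 <= cos thw <= 1 /\ sin thw ^ 2 + cos thw ^ 2 = 1.
Proof.
  intros. pose proof PI_RGT_0. pose proof (sin2_cos2 thw). unfold Rsqr in H1.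
  split. apply sin_ge_0; lra. split. split. apply cos_ge_0; lra.
  pose proof (COS_bound thw); lra. nra.
Qed.

Lemma main (powcap : R -> Prop)
  (L xiL xiN a b sb2 sw2 eps dlo dhi thlo : R) (n : nat)
  (HL : 0 < L) (HxiL : xiL < 0) (HxiN : xiN < 0) (Ha : 0 < a) (Hb : 0 < b)
  (Hsb : 0 < sb2) (Hsw : 0 < sw2)
  (Hthlo : 0 < thlo < PI / 2)
  (Hd : 0 < dlo /\ dlo < dhi /\ dhi <= L * cos thlo /\ L * cos thlo < L / cos thlo) :
  forall P dw thw,
     optimal powcap n xiL xiN a b L sb2 sw2 eps dlo dhi thlo P dw thw ->
     dw = dhi /\ thlo <= thw <= acos (dhi / L).
Proof.
  intros P dw thw [[HD [HP [Hcap [[Hdlo Hdhi] [Hth1 Hth2]]]]] Hmax].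
  destruct Hd as [Hd1 [Hd2 [Hd3 Hd4]]].
  pose proof PI_RGT_0 as HPI.
  assert (Hc0 : 0 < cos thlo) by (apply cos_gt_0; lra).
  assert (Hc1 : cos thlo < 1).
  { apply Rmult_lt_compat_l with (r := cos thlo) in Hd4; [|lra].
    replace (cos thlo * (L / cos thlo)) with L in Hd4 by (field; lra). nra. }
  set (k := dhi / L).
  assert (Hdk : dhi = k * L) by (unfold k; field; lra).
  assert (Hk0 : 0 < k) by (unfold k; apply Rdiv_lt_0_compat; lra).
  assert (Hk1 : k <= cos thlo) by (unfold k; apply Rmult_le_reg_r with L; [lra|];
    unfold Rdiv; rewrite Rmult_assoc, Rinv_l; lra).
  set (tt := acos k).
  assert (Hctt : cos tt = k) by (apply cos_acos; lra).
  assert (Hstt : sin tt = sqrt (1 - k²)) by (apply sin_acos; lra).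
  assert (Hstt2 : sin tt ^ 2 = 1 - k ^ 2).
  { rewrite Hstt. simpl. rewrite Rmult_1_r, sqrt_sqrt. unfold Rsqr; ring.
    unfold Rsqr; nra. }
  assert (Htt0 : 0 <= tt <= PI) by apply acos_bound.
  assert (Htt1 : thlo <= tt).
  { destruct (Rle_or_lt thlo tt) as [h|h]; auto.
    assert (cos thlo < cos tt) by (apply cos_decreasing_1; lra). lra. }
  assert (Htt2 : tt <= PI / 2).
  { unfold tt. rewrite acos_asin by lra.
    pose proof (asin_mono 0 k ltac:(lra) ltac:(lra) ltac:(lra)). rewrite asin_0 in H. lra. }
  assert (HdL : dhi < L) by nra.
  destruct (trig thw ltac:(lra)) as [Hs [Hc Hsc]].
  destruct (Qfacts L dw (cos thw) (sin thw) HL ltac:(lra) Hc Hs Hsc) as [Q1p Q1b].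
  assert (Hsttp : 0 <= sin tt) by (apply sin_ge_0; lra).
  assert (Hthtt : thw <= tt).
  { destruct (Rle_or_lt thw tt) as [h|h]; auto. exfalso.
    assert (Hct : cos thw < k) by (rewrite <- Hctt; apply cos_decreasing_1; lra).
    assert (Hfe : feasible powcap n xiL xiN a b sw2 eps dlo dhi thlo P dhi tt).
    { split. eapply Rle_trans; [|exact HD]. apply D01_mono; auto.
      apply Pbar_mono; auto; lra. repeat split; auto; lra. }
    pose proof (Hmax _ _ _ Hfe).
    assert (Q2e : L ^ 2 + dhi ^ 2 - 2 * dhi * L * cos tt = L^2 * (1 - k^2)).
    { rewrite Hctt, Hdk. ring. }
    assert (Q2p : 0 < L ^ 2 * (1 - k ^ 2)) by nra.
    assert (gamma_b xiL a b L sb2 P dw thw < gamma_b xiL a b L sb2 P dhi tt).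
    { apply gamma_lt; auto; unfold d_b.
      - rewrite Q2e. split. apply sqrt_lt_R0; auto. apply sqrt_lt_1; try lra.
        assert (dw * cos thw < dw * k) by (apply Rmult_lt_compat_l; lra).
        assert (0 <= (dw - k * L)^2) by apply pow2_ge_0. nra.
      - apply ratio_bound; auto; lra.
      - apply ratio_le; auto; try lra. rewrite Q2e. rewrite Hstt2.
        assert (E : k^2 * (L^2 + dw^2 - 2*dw*L*cos thw) - dw^2 * sin thw ^ 2 =
          (dw * cos thw - k^2 * L)^2 + (1 - k^2) * (k^2 * L^2 - dw^2)) by nra.
        assert (0 <= (1 - k^2) * (k^2 * L^2 - dw^2)).
        { apply Rmult_le_pos. nra. rewrite Hdk in Hdhi. nra. }
        assert (0 <= (dw * cos thw - k^2 * L)^2) by apply pow2_ge_0.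
        assert (dw ^ 2 * sin thw ^ 2 <= k^2 * (L^2 + dw^2 - 2*dw*L*cos thw)) by lra.
        rewrite Hdk. 
        replace (dw ^ 2 * sin thw ^ 2 * (L ^ 2 * (1 - k ^ 2))) with
          ((dw ^ 2 * sin thw ^ 2) * (L ^ 2 * (1 - k ^ 2))) by ring.
        replace ((k * L) ^ 2 * (1 - k ^ 2) * (L ^ 2 + dw ^ 2 - 2 * dw * L * cos thw))
          with ((k^2 * (L^2 + dw^2 - 2*dw*L*cos thw)) * (L ^ 2 * (1 - k ^ 2))) by ring.
        apply Rmult_le_compat_r; lra.
      - apply ratio_bound; auto; try lra. rewrite Q2e. replace ((dhi * sin tt)^2) with (dhi^2 * sin tt^2) by ring.
        rewrite Hstt2, Hdk. assert (0 <= L^2 * (1-k^2) * (1 - k^2)) by nra. nra. }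
    lra. }
  split; [|split; auto].
  destruct (Rle_or_lt dhi dw) as [h|h]; [lra|]. exfalso.
  assert (Hck : k <= cos thw).
  { rewrite <- Hctt. destruct (Req_dec thw tt) as [->|hne]; [lra|].
    left; apply cos_decreasing_1; lra. }
  assert (Hfe : feasible powcap n xiL xiN a b sw2 eps dlo dhi thlo P dhi thw).
  { split. eapply Rle_trans; [|exact HD]. apply D01_mono; auto.
    apply Pbar_mono; auto; lra. repeat split; auto; lra. }
  pose proof (Hmax _ _ _ Hfe).
  destruct (Qfacts L dhi (cos thw) (sin thw) HL ltac:(nra) Hc Hs Hsc) as [Q2p Q2b].
  assert (Q21 : L ^ 2 + dhi ^ 2 - 2 * dhi * L * cos thw < L ^ 2 + dw ^ 2 - 2 * dw * L * cos thw).
  { assert (dhi <= L * cos thw) by (rewrite Hdk; nra).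
    assert (0 < (dhi - dw) * (2 * L * cos thw - dhi - dw)) by (apply Rmult_lt_0_compat; lra).
    lra. }
  assert (gamma_b xiL a b L sb2 P dw thw < gamma_b xiL a b L sb2 P dhi thw).
  { apply gamma_lt; auto; unfold d_b.
    - split. apply sqrt_lt_R0; auto. apply sqrt_lt_1; lra.
    - apply ratio_bound; auto; lra.
    - apply ratio_le; auto; try lra.
      assert (dw^2 <= dhi^2) by nra.
      assert (0 <= sin thw ^ 2) by nra.
      apply Rmult_le_compat; try nra.
    - apply ratio_bound; auto; lra. }
  lra.
Qed.

Theorem theorem1
  (L xiL xiN a b sb2 sw2 eps Pm dlo dhi thlo : R) (n : nat)
  (HL : 0 < L) (HxiL : xiL < 0) (HxiN : xiN < 0) (Ha : 0 < a) (Hb : 0 < b)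
  (Hsb : 0 < sb2) (Hsw : 0 < sw2) (Hn : (1 <= n)%nat) (Heps : 0 < eps)
  (HPm : 0 < Pm)
  (Hthlo : 0 < thlo < PI / 2)
  (Hd : 0 < dlo /\ dlo < dhi /\ dhi <= L * cos thlo /\ L * cos thlo < L / cos thlo) :
  (* with the maximum power constraint P <= Pm *)
  (forall P dw thw,
     optimal (fun P => P <= Pm) n xiL xiN a b L sb2 sw2 eps dlo dhi thlo P dw thw ->
     dw = dhi /\ thlo <= thw <= acos (dhi / L)) /\
  (* without the maximum power constraint *)
  (forall P dw thw,
     optimal (fun _ => True) n xiL xiN a b L sb2 sw2 eps dlo dhi thlo P dw thw ->
     dw = dhi /\ thlo <= thw <= acos (dhi / L)).
Proof.
  split; apply main; auto.
Qed.
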